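(* Let $N,M\ge1$, $\mathcal H_+=\mathbb C^N$, $\mathcal H_-=\mathbb C^M$, $\mathcal H=\mathcal H_+\oplus\mathcal H_-$. Fix $b>0$ and $d_1,\dots,d_M\in i\mathbb R$, and put $B=\mathrm{diag}(b,0,\dots,0)$ ($N\times N$) and $D=\mathrm{diag}(d_1,\dots,d_M)$. For $\alpha=(\alpha_1,\dots,\alpha_M)\in\mathbb C^M$ with $|\alpha_1|^2+\dots+|\alpha_M|^2=1$, let $u$ be the $M\times N$ matrix whose first column is $\alpha$ and whose other columns are zero, and let $$\mu=\begin{pmatrix}0&-Bu^*\\ uB&D\end{pmatrix}.$$ Then for all integers $n\ge1$ and $1\le k\le n+1$ there exist polynomials $p^n_{j,k}$, $j=1,\dots,M$, in $M$ variables with real coefficients depending smoothly on $b,d_1,\dots,d_M$, such that for all such $\alpha$ the matrix $i^{n+1}(\mu H^{n-1}_{k-1}(\mu))_{--}u$ has first column with entries $i\,p^n_{j,k}(|\alpha_1|^2,\dots,|\alpha_M|^2)\,\alpha_j$ ($j=1,\dots,M$) and all other columns zero. Equivalently, the equation $\frac{\partial}{\partial t^n_k}u=i^{n+1}(\mu H^{n-1}_{k-1}(\mu))_{--}u$ becomes $$\frac{\partial}{\partial t^n_k}\alpha_j=i\,p^n_{j,k}(|\alpha_1|^2,\dots,|\alpha_M|^2)\,\alpha_j,\qquad j=1,\dots,M.$$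
   Context: $P_+$ and $P_-$ denote the orthogonal projectors of $\mathcal H$ onto $\mathcal H_+$ and $\mathcal H_-$; for an operator $X$ on $\mathcal H$, $X_{--}$ denotes the block $P_-XP_-$ regarded as an operator on $\mathcal H_-$. For integers $m\ge 0$ and $0\le l\le m+1$ and a matrix $\mu$ on $\mathcal H$, define $$H^m_l(\mu)=\sum_{\substack{i_0,\dots,i_m\in\{0,1\}\\ i_0+\dots+i_m=l}} P_+^{i_0}\mu P_+^{i_1}\mu\cdots\mu P_+^{i_m},$$ with $P_+^0=I$ the identity and $P_+^1=P_+$. *)

(* Defs.v *)
From HB Require Import structures.
From mathcomp Require Import all_boot all_order all_algebra.
From mathcomp Require Import all_classical all_reals all_analysis.
From mathcomp Require Import complex.
Set Implicit Arguments. Unset Strict Implicit. Unset Printing Implicit Defensive.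
Import Order.TTheory GRing.Theory Num.Theory.
Import numFieldNormedType.Exports.
Local Open Scope ring_scope.
Local Open Scope complex_scope.

(* H = C^N (+) C^M realized as C^(N+M); block matrices via block_mx. *)

Definition Pplus (C : pzRingType) (N M : nat) : 'M[C]_(N + M) :=
  block_mx 1%:M 0 0 0.

Definition Ppow (C : pzRingType) (N M : nat) (i : bool) : 'M[C]_(N + M) :=
  if i then Pplus C N M else 1%:M.
Arguments Ppow {C} N M i.

(* H^m_l(mu) = sum over (i_0,...,i_m) in {0,1}^{m+1} with i_0+...+i_m = l of
   P_+^{i_0} mu P_+^{i_1} mu ... mu P_+^{i_m}. *)
Definition Hml (C : pzRingType) (N M : nat) (m l : nat) (mu : 'M[C]_(N + M))
  : 'M[C]_(N + M) :=
  \sum_(s : {ffun 'I_m.+1 -> bool} | (\sum_(j < m.+1) nat_of_bool (s j))%N == l)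
     (Ppow N M (s ord0) *m
      \big[mulmx/1%:M]_(j < m) (mu *m Ppow N M (s (lift ord0 j)))).

(* X_{--} = P_- X P_- regarded as an operator on H_- : the lower-right block. *)
Arguments Hml {C} N M m l mu.

Definition minus_block (C : pzRingType) (N M : nat) (X : 'M[C]_(N + M)) : 'M[C]_M :=
  drsubmx X.

Definition mu_mx (R : rcfType) (N M : nat) (B : 'M[R[i]]_N) (D : 'M[R[i]]_M)
  (u : 'M[R[i]]_(M, N)) : 'M[R[i]]_(N + M) :=
  block_mx 0 (- (B *m (map_mx conjc u^T))) (u *m B) D.

Fixpoint iter_partial (R : realType) (m : nat) (s : seq 'I_m)
  (f : 'rV[R]_m -> R^o) : 'rV[R]_m -> R^o :=
  match s with
  | [::] => f
  | i :: s' => fun x => 'D_(delta_mx 0 i) (iter_partial s' f) x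
  end.

Definition smooth_on (R : realType) (m : nat) (U : set 'rV[R]_m)
  (f : 'rV[R]_m -> R^o) : Prop :=
  forall (s : seq 'I_m) (x : 'rV[R]_m), U x ->
    (forall i : 'I_m, derivable (iter_partial s f) x (delta_mx 0 i)) /\
    {for x, continuous (iter_partial s f)}.

(* A polynomial in M variables with real coefficients, given by the family of
   coefficients c e of the monomials X^e, e ranging over exponents < K,
   evaluated at a point y (embedded in C). *)
Definition poly_evalC (R : rcfType) (M K : nat) (c : {ffun 'I_M -> 'I_K} -> R)
  (y : 'I_M -> R[i]) : R[i] :=
  \sum_(e : {ffun 'I_M -> 'I_K}) ((c e)%:C * \prod_(j < M) y j ^+ (e j)).

(* Main.v *)
Require Import Defs.
From HB Require Import structures.
From mathcomp Require Import all_boot all_order all_algebra.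
From mathcomp Require Import all_classical all_reals all_analysis.
From mathcomp Require Import complex.
From mathcomp Require Import ring.
Import Order.TTheory GRing.Theory Num.Theory.
Import numFieldNormedType.Exports.
Local Open Scope ring_scope.
Local Open Scope complex_scope.
Set Implicit Arguments. Unset Strict Implicit.


Inductive polyfun (R : realType) (m : nat) : ('rV[R]_m -> R^o) -> Prop :=
| pf_cst (c : R) : polyfun (fun _ => c)
| pf_coord (i : 'I_m) : polyfun (fun x => x ord0 i)
| pf_add f g : polyfun f -> polyfun g -> polyfun (fun x => f x + g x)
| pf_mul f g : polyfun f -> polyfun g -> polyfun (fun x => f x * g x).
Arguments pf_cst {R m}. Arguments pf_coord {R m}. Arguments pf_add {R m f g}. Arguments pf_mul {R m f g}.

Lemma coord_is_derive (R : realType) (m : nat) (i : 'I_m) (x v : 'rV[R]_m) :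
  is_derive x v (fun y : 'rV[R]_m => (y ord0 i : R^o)) (v ord0 i).
Proof.
have hd : derivable (@id 'rV[R]_m) x v by exact: derivable_id.
have := derive_mx hd; rewrite derive_val => /matrixP /(_ ord0 i); rewrite mxE => e.
apply: DeriveDef; last by rewrite -e.
by move/derivable_mxP: hd => /(_ ord0 i).
Qed.

Lemma polyfun_derive (R : realType) (m : nat) (f : 'rV[R]_m -> R^o) :
  polyfun f -> forall v, exists g, polyfun g /\ forall x, is_derive x v f (g x).
Proof.
elim => [c|i|f1 g1 pf1 IHf pg1 IHg|f1 g1 pf1 IHf pg1 IHg] v.
- exists (fun _ => 0); split; first exact: pf_cst.
  move=> x; exact: is_derive_cst.
- exists (fun _ => v ord0 i); split; first exact: pf_cst.
  move=> x; exact: coord_is_derive.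
- have [df [pf hf]] := IHf v; have [dg [pg hg]] := IHg v.
  exists (fun x => df x + dg x); split; first exact: pf_add.
  move=> x; have := is_deriveD (hf x) (hg x); done.
- have [df [pf hf]] := IHf v; have [dg [pg hg]] := IHg v.
  exists (fun x => f1 x * dg x + g1 x * df x); split.
    by apply: pf_add; apply: pf_mul.
  move=> x; have := is_deriveM (hf x) (hg x); done.
Qed.

Lemma polyfun_cont (R : realType) (m : nat) (f : 'rV[R]_m -> R^o) :
  polyfun f -> continuous f.
Proof.
elim => [c|i|f1 g1 _ IHf _ IHg|f1 g1 _ IHf _ IHg] x.
- exact: cst_continuous.
- exact: coord_continuous.
- exact: (continuousD (IHf x) (IHg x)).
- exact: (continuousM (IHf x) (IHg x)).
Qed.

Lemma polyfun_iter (R : realType) (m : nat) (f : 'rV[R]_m -> R^o) s :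
  polyfun f -> polyfun (iter_partial s f).
Proof.
move=> pf; elim: s => [|i s IH] //=.
have [g [pg hg]] := polyfun_derive IH (delta_mx 0 i).
suff -> : (fun x => 'D_(delta_mx 0 i) (iter_partial s f) x) = g by [].
by apply/funext => x; rewrite derive_val.
Qed.

Lemma polyfun_smooth (R : realType) (m : nat) (U : set 'rV[R]_m) f :
  polyfun f -> smooth_on U f.
Proof.
move=> pf s x _; have ps := polyfun_iter s pf; split.
- move=> i; have [g [_ hg]] := polyfun_derive ps (delta_mx 0 i).
  by have [] := hg x.
- exact: polyfun_cont.
Qed.


Definition Pol (R : realType) (M K : nat) := {ffun 'I_M -> 'I_K.+1} -> 'rV[R]_(M.+1) -> R.

Definition good (R : realType) M K (B : nat) (c : Pol R M K) :=
  (forall e, polyfun (c e)) /\ (forall (e : {ffun 'I_M -> 'I_K.+1}) (j : 'I_M) x, (B <= e j)%N -> c e x = 0).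

Definition ev (R : realType) M K (c : Pol R M K) x (y : 'I_M -> R[i]) :=
  poly_evalC (fun e => c e x) y.

Definition incf M K (j : 'I_M) (e : {ffun 'I_M -> 'I_K.+1}) : {ffun 'I_M -> 'I_K.+1} :=
  [ffun i => if i == j then ordS (e i) else e i].
Definition decf M K (j : 'I_M) (e : {ffun 'I_M -> 'I_K.+1}) : {ffun 'I_M -> 'I_K.+1} :=
  [ffun i => if i == j then ord_pred (e i) else e i].

Lemma incfK M K j : cancel (@incf M K j) (@decf M K j).
Proof.
move=> e; apply/ffunP => i; rewrite !ffunE; case: eqP => // ->.
by rewrite ordSK.
Qed.

Definition pshift (R : realType) M K (j : 'I_M) (c : Pol R M K) : Pol R M K :=
  fun e x => if (e j == ord0) then 0 else c (decf j e) x.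

Lemma ev_add (R : realType) M K (c d : Pol R M K) x y :
  ev (fun e x => c e x + d e x) x y = ev c x y + ev d x y.
Proof.
rewrite /ev /poly_evalC -big_split /=; apply: eq_bigr => e _.
by rewrite rmorphD mulrDl.
Qed.

Lemma ev_scale (R : realType) M K (f : 'rV[R]_M.+1 -> R) (c : Pol R M K) x y :
  ev (fun e x => f x * c e x) x y = (f x)%:C * ev c x y.
Proof.
rewrite /ev /poly_evalC mulr_sumr; apply: eq_bigr => e _.
by rewrite rmorphM mulrA.
Qed.

Lemma ev_zero (R : realType) M K x y : ev (fun (_ : {ffun 'I_M -> 'I_K.+1}) (_ : 'rV[R]_M.+1) => 0) x y = 0.
Proof. by rewrite /ev /poly_evalC big1 // => e _; rewrite mul0r. Qed.

Lemma ev_sum (R : realType) M K (c : 'I_M -> Pol R M K) x y :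
  ev (fun e x => \sum_(p < M) c p e x) x y = \sum_(p < M) ev (c p) x y.
Proof.
rewrite /ev /poly_evalC exchange_big /=; apply: eq_bigr => e _.
by rewrite rmorph_sum mulr_suml.
Qed.

Definition pone (R : realType) M K : Pol R M K := fun e _ => if e == [ffun => ord0] then 1 else 0.

Lemma ev_one (R : realType) M K x y : ev (@pone R M K) x y = 1.
Proof.
rewrite /ev /poly_evalC (bigD1 [ffun => ord0]) //= [X in _ + X]big1; last first.
  by move=> e ne; rewrite /pone (negbTE ne) mul0r.
rewrite /pone eqxx mul1r addr0 big1 // => j _.
by rewrite ffunE expr0.
Qed.

Lemma ev_shift (R : realType) M K (j : 'I_M) (c : Pol R M K) x y :
  (forall e : {ffun 'I_M -> 'I_K.+1}, e j = ord_max -> c e x = 0) ->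
  ev (pshift j c) x y = y j * ev c x y.
Proof.
move=> hc; rewrite /ev /poly_evalC (reindex_inj (can_inj (@incfK M K j))) mulr_sumr.
apply: eq_bigr => e _; rewrite /pshift incfK.
have [ej|nej] := eqVneq (e j) ord_max.
  by rewrite hc // if_same rmorph0 !mul0r mulr0.
have hS : nat_of_ord (ordS (e j)) = (e j).+1.
  rewrite /= modn_small //; rewrite ltnS; have := ltn_ord (e j).
  rewrite ltnS leq_eqVlt => /orP [/eqP h|//]; case/eqP: nej; exact/val_inj.
have -> : (incf j e j == ord0) = false.
  rewrite ffunE eqxx; apply/negbTE; rewrite -val_eqE; change (nat_of_ord (ordS (e j)) != 0%N); by rewrite hS.
rewrite mulrCA; congr (_ * _).
rewrite (bigD1 j) //= [in RHS](bigD1 j) //= mulrA; congr (_ * _).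
  by rewrite ffunE eqxx hS exprS.
by apply: eq_bigr => i /negbTE ni; rewrite ffunE ni.
Qed.


Lemma polyfun_sum (R : realType) m n (g : 'I_n -> 'rV[R]_m -> R) :
  (forall p, polyfun (g p)) -> polyfun (fun x => \sum_(p < n) g p x).
Proof.
move=> hg; rewrite /index_enum; elim: (Finite.enum _) => [|a r IH].
  have -> : (fun x : 'rV[R]_m => \sum_(p <- [::]) g p x) = (fun _ => 0).
    by apply/funext => x; rewrite big_nil.
  exact: pf_cst.
have -> : (fun x => \sum_(p <- a :: r) g p x) = (fun x => g a x + \sum_(p <- r) g p x).
  by apply/funext => x; rewrite big_cons.
exact: pf_add.
Qed.

Lemma good_zero (R : realType) M K B : good B (fun (_ : {ffun 'I_M -> 'I_K.+1}) (_ : 'rV[R]_M.+1) => 0).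
Proof. by split => *; [exact: pf_cst|]. Qed.

Lemma good_one (R : realType) M K : good 1 (@pone R M K).
Proof.
split => [e|e j x h]; first by rewrite /pone; case: ifP => _; exact: pf_cst.
rewrite /pone; case: eqP => // he; move: h; rewrite he ffunE //.
Qed.

Lemma good_mono (R : realType) M K B B' (c : Pol R M K) :
  (B <= B')%N -> good B c -> good B' c.
Proof. move=> hB [h1 h2]; split => // e j x h; apply: (h2 e j); exact: leq_trans h. Qed.

Lemma good_add (R : realType) M K B (c d : Pol R M K) :
  good B c -> good B d -> good B (fun e x => c e x + d e x).
Proof.
move=> [c1 c2] [d1 d2]; split => [e|e j x h]; first exact: pf_add.
by rewrite (c2 e j) ?(d2 e j) ?addr0.
Qed.

Lemma good_scale (R : realType) M K B (f : 'rV[R]_M.+1 -> R) (c : Pol R M K) :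
  polyfun f -> good B c -> good B (fun e x => f x * c e x).
Proof.
move=> pf [c1 c2]; split => [e|e j x h]; first exact: pf_mul.
by rewrite (c2 e j) ?mulr0.
Qed.

Lemma good_sum (R : realType) M K B (c : 'I_M -> Pol R M K) :
  (forall p, good B (c p)) -> good B (fun e x => \sum_(p < M) c p e x).
Proof.
move=> hc; split => [e|e j x h]; first by apply: polyfun_sum => p; case: (hc p).
by rewrite big1 // => p _; case: (hc p) => _ h2; exact: (h2 e j).
Qed.

Lemma good_shift (R : realType) M K B (j : 'I_M) (c : Pol R M K) :
  good B c -> good B.+1 (pshift j c).
Proof.
move=> [c1 c2]; split => [e|e j' x h].
  rewrite /pshift; case: (e j == ord0); [exact: pf_cst|exact: c1].
rewrite /pshift; case: ifP => // hj.
have [ej|nj] := eqVneq j' j.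
  subst j'; apply: (c2 _ j); rewrite ffunE eqxx.
  have := negbT hj.
  rewrite -val_eqE /=; move: h (ltn_ord (e j)).
  case: (nat_of_ord (e j)) => // k h hk _.
  rewrite addSn /= modnDr modn_small //; exact: ltnW.
apply: (c2 _ j'); rewrite ffunE (negbTE nj); exact: ltnW.
Qed.


Definition yv (R : realType) M (a : 'I_M -> R[i]) : 'I_M -> R[i] := fun j => `|a j| ^+ 2.

Definition Invar (R : realType) N M K (t : nat)
  (W : 'rV[R]_(M.+1) -> ('I_M -> R[i]) -> 'cV[R[i]]_(N + M)) :=
  exists (C : Pol R M K) (L : 'I_M -> Pol R M K),
    good t.+1 C /\ (forall p, good t.+1 (L p)) /\
    forall x a, W x a = col_mx (\col_(q < N) (if nat_of_ord q == 0%N then 'i%C ^+ t.+1 * ev C x (yv a) else 0))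
                              (\col_(p < M) ('i%C ^+ t * ev (L p) x (yv a) * a p)).

Lemma Inv_zero (R : realType) N M K t : @Invar R N M K t (fun _ _ => 0).
Proof.
exists (fun _ _ => 0), (fun _ _ _ => 0); split; first exact: good_zero.
split; first by move=> p; exact: good_zero.
move=> x a; rewrite ev_zero; apply/matrixP => i j; rewrite !mxE.
by case: splitP => k _; rewrite !mxE ?ev_zero ?mulr0 ?mul0r ?if_same.
Qed.

Lemma Inv_add (R : realType) N M K t W1 W2 :
  @Invar R N M K t W1 -> @Invar R N M K t W2 -> @Invar R N M K t (fun x a => W1 x a + W2 x a).
Proof.
move=> [C1 [L1 [g1 [h1 e1]]]] [C2 [L2 [g2 [h2 e2]]]].
exists (fun e x => C1 e x + C2 e x), (fun p e x => L1 p e x + L2 p e x).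
split; first exact: good_add.
split; first by move=> p; exact: good_add.
move=> x a; rewrite e1 e2 add_col_mx; congr col_mx; apply/matrixP => i j; rewrite !mxE ev_add.
  by case: ifP; rewrite ?addr0 // mulrDr.
by rewrite mulrDr mulrDl.
Qed.

Lemma Inv_ext (R : realType) N M K t W W' :
  (forall x a, W x a = W' x a) -> @Invar R N M K t W -> @Invar R N M K t W'.
Proof.
move=> hW [C [L [g [h e]]]]; exists C, L; split => //; split => // x a.
by rewrite -hW e.
Qed.

Lemma Inv_sum (R : realType) N M K t (I : eqType) (r : seq I) (P : pred I) F :
  (forall s, @Invar R N M K t (F s)) ->
  @Invar R N M K t (fun x a => \sum_(s <- r | P s) F s x a).
Proof.
move=> hF; elim: r => [|s r IH].
  by apply: Inv_ext (@Inv_zero R N M K t) => x a; rewrite big_nil.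
case hs: (P s).
  by apply: Inv_ext (Inv_add (hF s) IH) => x a; rewrite big_cons hs.
by apply: Inv_ext IH => x a; rewrite big_cons hs.
Qed.

Lemma Inv_P (R : realType) N M K t W (b : bool) :
  @Invar R N M K t W -> @Invar R N M K t (fun x a => Ppow N M b *m W x a).
Proof.
case: b => /=; last by apply: Inv_ext => x a; rewrite mul1mx.
move=> [C [L [g [h e]]]].
exists C, (fun _ _ _ => 0); split => //; split; first by move=> p; exact: good_zero.
move=> x a; rewrite e /Pplus mul_block_col !mul0mx mul1mx !addr0; congr col_mx.
by apply/matrixP => i j; rewrite !mxE ev_zero mulr0 mul0r.
Qed.


Lemma conjc_mul_norm (R : realType) (z : R[i]) : conjc z * z = `|z| ^+ 2.
Proof.
rewrite -add_Re2_Im2; case: z => a b /=.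
apply/eqP; rewrite eq_complex /=; apply/andP; split; apply/eqP.
  by rewrite !expr2 mulNr opprK.
by rewrite mulNr mulrC subrr.
Qed.

Lemma sum_at (T : zmodType) n (k : 'I_n) (f : 'I_n -> T) :
  (forall s, s != k -> f s = 0) -> \sum_(s < n) f s = f k.
Proof. by move=> h; rewrite (bigD1 k) //= big1 ?addr0. Qed.

Lemma sumB (T : ringType) n (q : 'I_n) (b : T) (f : 'I_n -> T) :
  \sum_(s < n) (if (q == s) && (nat_of_ord q == 0%N) then b else 0) * f s =
  if nat_of_ord q == 0%N then b * f q else 0.
Proof.
rewrite (sum_at (k:=q)) ?eqxx /=; first by case: ifP; rewrite ?mul0r.
by move=> s ns; rewrite eq_sym (negbTE ns) mul0r.
Qed.

Lemma sumD (T : ringType) n (q : 'I_n) (b : T) (f : 'I_n -> T) :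
  \sum_(s < n) (if q == s then b else 0) * f s = b * f q.
Proof.
rewrite (sum_at (k:=q)) ?eqxx //= => s ns.
by rewrite eq_sym (negbTE ns) mul0r.
Qed.

Lemma sumU (T : ringType) n (b : T) (f : 'I_n.+1 -> T) :
  \sum_(s < n.+1) (if nat_of_ord s == 0%N then b else 0) * f s = b * f ord0.
Proof.
rewrite (sum_at (k:=ord0)) //= => s ns.
have -> : (nat_of_ord s == 0%N) = false by apply/negbTE; rewrite -val_eqE /= in ns.
by rewrite mul0r.
Qed.

Definition Bm (R : realType) N M (x : 'rV[R]_(M.+1)) : 'M[R[i]]_N :=
  \matrix_(p < N, q < N) (if ((p == q) && (nat_of_ord p == 0%N)) then (x ord0 ord0)%:C else 0).
Definition Dm (R : realType) M (x : 'rV[R]_(M.+1)) : 'M[R[i]]_M :=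
  \matrix_(p < M, q < M) (if p == q then 'i%C * (x ord0 (lift ord0 p))%:C else 0).
Definition Um (R : realType) N M (a : 'I_M -> R[i]) : 'M[R[i]]_(M, N) :=
  \matrix_(p < M, q < N) (if nat_of_ord q == 0%N then a p else 0).
Definition muF (R : realType) N M x a : 'M[R[i]]_(N + M) :=
  mu_mx (Bm N x) (@Dm R M x) (Um N a).

Lemma Inv_mu (R : realType) N M K t W : (t.+1 <= K)%N ->
  @Invar R N.+1 M K t W -> @Invar R N.+1 M K t.+1 (fun x a => @muF R N.+1 M x a *m W x a).
Proof.
move=> tK [C [L [g [h e]]]].
pose C' : Pol R M K := fun e x => x ord0 ord0 * \sum_(p < M) pshift p (L p) e x.
pose L' : 'I_M -> Pol R M K := fun p e x => x ord0 ord0 * C e x + x ord0 (lift ord0 p) * L p e x.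
exists C', L'; split.
  apply: good_scale; first exact: pf_coord.
  by apply: good_sum => p; apply: good_shift.
split.
  move=> p; apply: good_add; apply: good_scale; try exact: pf_coord.
    exact: good_mono g.
  exact: good_mono (h p).
move=> x a.
have eC : ev C' x (yv a) = (x ord0 ord0)%:C * \sum_(p < M) yv a p * ev (L p) x (yv a).
  rewrite /C' (ev_scale (fun x => x ord0 ord0)) (ev_sum (fun p => pshift p (L p))).
  congr (_ * _); apply: eq_bigr => p _; apply: ev_shift => e' he.
  case: (h p) => _ h2; apply: (h2 e' p); by rewrite he.
rewrite e /muF /mu_mx /Bm /Um /Dm mul_block_col mul0mx add0r; congr col_mx.
  rewrite mulNmx -mulmxA; apply/matrixP => q j; rewrite mxE [X in - X]mxE.
  under eq_bigr => s _ do rewrite [X in X * _]mxE.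
  rewrite sumB [RHS]mxE; case: ifP => hq; last by rewrite oppr0.
  rewrite mxE; under eq_bigr => r _ do rewrite !mxE hq.
  rewrite eC -addn2 exprD sqr_i mulr_sumr mulr_sumr -sumrN mulr_sumr.
  apply: eq_bigr => r _; rewrite /yv -conjc_mul_norm; ring.
rewrite -mulmxA; apply/matrixP => p j; rewrite mxE [X in X + _]mxE [X in _ + X]mxE.
under eq_bigr => s _ do rewrite [X in X * _]mxE.
rewrite sumU mxE.
under eq_bigr => s _ do rewrite [X in X * _]mxE.
rewrite sumB /= mxE /=.
under eq_bigr => s _ do rewrite [X in X * _]mxE.
rewrite sumD !mxE /L' ev_add (ev_scale (fun x => x ord0 ord0)) (ev_scale (fun x => x ord0 (lift ord0 p))).
rewrite !exprS; ring.
Qed.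


Lemma Inv_word (R : realType) N M K m : forall (F : 'I_m -> bool) t W,
  (t + m <= K)%N -> @Invar R N.+1 M K t W ->
  @Invar R N.+1 M K (t + m) (fun x a =>
     (\big[mulmx/1%:M]_(j < m) (@muF R N.+1 M x a *m Ppow N.+1 M (F j))) *m W x a).
Proof.
elim: m => [|m IH] F t W htm hW.
  by rewrite addn0; apply: Inv_ext hW => x a; rewrite big_ord0 mul1mx.
have htm' : (t + m <= K)%N by apply: leq_trans htm; rewrite leq_add2l.
have h1 := IH (fun j => F (lift ord0 j)) t W htm' hW.
have h2 := Inv_mu _ (Inv_P (F ord0) h1).
rewrite addnS; apply: Inv_ext (h2 _); last by rewrite -addnS.
by move=> x a; rewrite big_ord_recl /= !mulmxA.
Qed.

Lemma drsub_col (T : pzRingType) N M (X : 'M[T]_(N + M)) (v : 'cV[T]_M) :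
  drsubmx X *m v = dsubmx (X *m col_mx 0 v).
Proof. by rewrite -[X in X *m col_mx _ _](submxK X) mul_block_col !mulmx0 !add0r col_mxKd. Qed.

Unset Implicit Arguments.
Theorem proposition4p1 (R : realType) (N M : nat) (hN : (0 < N)%N) (hM : (0 < M)%N)
  (n k : nat) (hn : (1 <= n)%N) (hk1 : (1 <= k)%N) (hk2 : (k <= n.+1)%N) :
  exists (K : nat) (c : 'I_M -> {ffun 'I_M -> 'I_K} -> 'rV[R]_(M.+1) -> R),
    (forall j e, smooth_on [set x : 'rV[R]_(M.+1) | 0 < x ord0 ord0] (c j e)) /\
    forall (x : 'rV[R]_(M.+1)) (alpha : 'I_M -> R[i]),
      0 < x ord0 ord0 ->
      \sum_(j < M) `|alpha j| ^+ 2 = 1 ->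
      let b : R[i] := (x ord0 ord0)%:C in
      let B : 'M[R[i]]_N := \matrix_(p < N, q < N)
                              (if ((p == q) && (nat_of_ord p == 0%N)) then b else 0) in
      let D : 'M[R[i]]_M := \matrix_(p < M, q < M)
                              (if p == q then 'i%C * (x ord0 (lift ord0 p))%:C else 0) in
      let u : 'M[R[i]]_(M, N) := \matrix_(p < M, q < N)
                              (if nat_of_ord q == 0%N then alpha p else 0) in
      let mu := mu_mx B D u in
      ('i%C ^+ n.+1 *: (minus_block (mu *m Hml N M n.-1 k.-1 mu) *m u))
      = \matrix_(p < M, q < N)
          (if nat_of_ord q == 0%N then
             'i%C * poly_evalC (c p ^~ x) (fun j => `|alpha j| ^+ 2) * alpha p
           else 0).
Proof.
case: N hN => // N _.
pose w0 := fun (x : 'rV[R]_(M.+1)) (a : 'I_M -> R[i]) => col_mx (0 : 'cV[R[i]]_N.+1) (\col_(p < M) a p).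
have I0 : @Invar R N.+1 M n 0 w0.
  exists (fun _ _ => 0), (fun _ => @pone R M n); split; first exact: good_zero.
  split; first by move=> p; exact: good_one.
  move=> x a; rewrite /w0; congr col_mx; apply/matrixP => i j; rewrite !mxE.
    by rewrite ev_zero mulr0 if_same.
  by rewrite ev_one expr0 !mul1r.
pose V := fun x a => (@muF R N.+1 M x a *m Hml N.+1 M n.-1 k.-1 (@muF R N.+1 M x a)) *m w0 x a.
have IV : @Invar R N.+1 M n n V.
  have h1 : @Invar R N.+1 M n n.-1 (fun x a => Hml N.+1 M n.-1 k.-1 (@muF R N.+1 M x a) *m w0 x a).
    apply: Inv_ext; last first.
      apply: (@Inv_sum _ _ _ _ _ _ (index_enum _) (fun s : {ffun 'I_n.-1.+1 -> bool} => (\sum_(j < n.-1.+1) nat_of_bool (s j))%N == k.-1)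
         (fun s x a => Ppow N.+1 M (s ord0) *m ((\big[mulmx/1%:M]_(j < n.-1) (@muF R N.+1 M x a *m Ppow N.+1 M (s (lift ord0 j)))) *m w0 x a))).
      move=> s; apply: Inv_P.
      have := @Inv_word R N M n n.-1 (fun j => s (lift ord0 j)) 0 w0.
      by rewrite add0n; apply; rewrite ?leq_pred.
    move=> x a; rewrite /Hml mulmx_suml; apply: eq_bigr => s _.
    by rewrite mulmxA.
  have := Inv_mu _ h1; rewrite prednK //; move=> /(_ (leqnn _)).
  by apply: Inv_ext => x a; rewrite /V mulmxA.
have [L [Ls [_ [gL eV]]]] := IV.
exists n.+1, (fun p e x => (-1) ^+ n * Ls p e x); split.
  move=> j e; apply: polyfun_smooth; apply: pf_mul; first exact: pf_cst.
  by case: (gL j).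
move=> x a _ _ b B D u mu.
have -> : mu = @muF R N.+1 M x a by [].
apply/matrixP => p q; rewrite !mxE.
under eq_bigr => r _ do rewrite [X in _ * X]mxE.
case: ifP => hq; last by rewrite big1 ?mulr0 // => r _; rewrite mulr0.
set X := (muF N.+1 x a *m _).
transitivity ('i%C ^+ n.+1 * (minus_block X *m \col_(r < M) a r) p ord0).
  by congr (_ * _); rewrite [RHS]mxE; apply: eq_bigr => r _; rewrite [X in _ = _ * X]mxE.
rewrite /minus_block drsub_col.
have -> : X *m col_mx 0 (\col_r a r) = V x a by [].
rewrite eV col_mxKd mxE.
have -> : poly_evalC (fun e => (-1) ^+ n * Ls p e x) (fun j => `|a j| ^+ 2) =
   ((-1) ^+ n)%:C * ev (Ls p) x (yv a).
  by rewrite -(ev_scale (fun _ => (-1) ^+ n)).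
have hi : 'i%C ^+ n.+1 * 'i%C ^+ n = 'i%C * (-1) ^+ n :> R[i].
  by rewrite exprS -mulrA -exprD addnn -mul2n exprM sqr_i.
rewrite rmorphXn rmorphN1 !mulrA hi; by [].
Qed.
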